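(* In the setting described in the context (no inter-cell interference), suppose the target rates $R_k,R_{\tilde k}>0$ satisfy $$R_{\tilde k}<\log_2\left(1+\frac{\beta_{\tilde k}^2|\mu_k|^2}{\sum_{i=1}^K|\boldsymbol\psi_i^{\mathrm H}\boldsymbol\nu_1|^2+\beta_k^2\beta_{\tilde k}^2|\mu_k|^2+\frac{\sigma_k^2}{P\ell(d_k)}}\right),\qquad R_k<\log_2\left(1+\frac{|\mu_k|^2\beta_k^2}{\sum_{i=1}^K|\boldsymbol\psi_i^{\mathrm H}\boldsymbol\nu_2|^2+\frac{\sigma_k^2}{P\ell(d_k)}}\right).$$ Then the near-user outage probability $$p_k=\Pr\left(\log_2(1+\mathrm{SINR}_{k\to\tilde k})<R_{\tilde k}\ \text{ or }\ \log_2(1+\mathrm{SINR}_k)<R_k\right)$$ tends to $0$ as $\sigma_h^2\to0$ (equivalently, as the channel K factor $\mathcal K=\|\hat{\mathbf H}\|_F^2/(\sigma_h^2\mathrm{Tr}(\mathbf R_t)\mathrm{Tr}(\mathbf R_r))\to\infty$), with all other quantities held fixed.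
   Context: Let $K\le\min\{M,N\}$ be positive integers and $k\in\{1,\dots,K\}$. Fix $\hat{\mathbf H}\in\mathbb C^{N\times M}$, Hermitian positive definite $\mathbf R_r\in\mathbb C^{N\times N}$, $\mathbf R_t\in\mathbb C^{M\times M}$, and $\sigma_h^2>0$; the estimation error is $\mathbf E=\mathbf R_r^{1/2}\mathbf E_w\mathbf R_t^{1/2}$ with $\mathrm{vec}(\mathbf E_w)\sim\mathcal{CN}(\mathbf 0,\sigma_h^2\mathbf I_{NM})$. Fix $\mathbf V=(\mathbf v_1,\dots,\mathbf v_K)\in\mathbb C^{M\times K}$ with $\|\mathbf v_i\|=1$, a nonzero receive filter $\mathbf u\in\mathbb C^N$ of the near user $k$, coefficients $\beta_k,\beta_{\tilde k}\ge0$ with $\beta_k^2+\beta_{\tilde k}^2=1$, $P>0$, $d_k>0$, $\ell(d)=d^{-\alpha}$ with $\alpha>2$, $\sigma^2\ge0$, and $\sigma_k^2=\sigma^2\|\mathbf u\|^2$. With no inter-cell interference, the SINR for decoding the far user's message at user $k$ (SIC step) and for decoding its own message are $$\mathrm{SINR}_{k\to\tilde k}=\frac{P\ell(d_k)|\mathbf u^{\mathrm H}\hat{\mathbf H}\mathbf v_k|^2\beta_{\tilde k}^2}{P\ell(d_k)\left(|\mathbf u^{\mathrm H}\mathbf E\mathbf v_k|^2\beta_{\tilde k}^2+|\mathbf u^{\mathrm H}(\hat{\mathbf H}+\mathbf E)\mathbf v_k|^2\beta_k^2+\sum_{i\ne k}|\mathbf u^{\mathrm H}(\hat{\mathbf H}+\mathbf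 E)\mathbf v_i|^2\right)+\sigma_k^2},$$ $$\mathrm{SINR}_k=\frac{P\ell(d_k)|\mathbf u^{\mathrm H}\hat{\mathbf H}\mathbf v_k|^2\beta_k^2}{P\ell(d_k)\left(|\mathbf u^{\mathrm H}\mathbf E\mathbf v_k|^2+\sum_{i\ne k}|\mathbf u^{\mathrm H}(\hat{\mathbf H}+\mathbf E)\mathbf v_i|^2\right)+\sigma_k^2}.$$ Define $\mu_i=\mathbf u^{\mathrm H}\hat{\mathbf H}\mathbf v_i$, $\boldsymbol\nu_1=(\mu_1,\dots,\mu_{k-1},\beta_k^2\mu_k,\mu_{k+1},\dots,\mu_K)^{\mathrm T}$, $\boldsymbol\nu_2=(\mu_1,\dots,\mu_{k-1},0,\mu_{k+1},\dots,\mu_K)^{\mathrm T}$, and $\boldsymbol\Sigma=\sigma_h^2(\mathbf u^{\mathrm H}\mathbf R_r\mathbf u)(\mathbf V^{\mathrm H}\mathbf R_t\mathbf V)^{\mathrm T}$ (the covariance of $(\mathbf u^{\mathrm H}\mathbf E\mathbf V)^{\mathrm T}$) with eigendecomposition $\boldsymbol\Sigma=\boldsymbol\Psi\boldsymbol\Delta\boldsymbol\Psi^{\mathrm H}$, $\boldsymbol\Psi=(\boldsymbol\psi_1,\dots,\boldsymbol\psi_K)$ unitary. *)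

(* Defs.v *)
From HB Require Import structures.
From mathcomp Require Import all_boot all_order all_algebra.
From mathcomp Require Import all_classical all_reals all_analysis.
From mathcomp Require Import complex.

Set Implicit Arguments.
Unset Strict Implicit.
Unset Printing Implicit Defensive.

Import Order.TTheory GRing.Theory Num.Theory.
Local Open Scope ring_scope.
Local Open Scope classical_set_scope.

Section Defs.
Variable R : realType.
Local Notation C := (R[i]).

Definition adjmx m n (A : 'M[C]_(m, n)) : 'M[C]_(n, m) := (map_mx (@conjc R) A)^T.

Definition abs2 (z : C) : R := complex.Re z ^+ 2 + complex.Im z ^+ 2.

Definition vnorm2 n (x : 'cV[C]_n) : R := \sum_(j < n) abs2 (x j 0).

Definition hermitian n (A : 'M[C]_n) : Prop := adjmx A = A.

Definition posdef n (A : 'M[C]_n) : Prop :=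
  hermitian A /\
  forall x : 'cV[C]_n, x != 0 -> 0 < complex.Re ((adjmx x *m A *m x) 0 0).

Definition unitary_mx n (U : 'M[C]_n) : Prop := adjmx U *m U = 1%:M.

Definition bform m n (a : 'cV[C]_m) (A : 'M[C]_(m, n)) (b : 'cV[C]_n) : C :=
  (adjmx a *m A *m b) 0 0.

Definition log2 (x : R) : R := ln x / ln 2.

Definition pathloss (alpha d : R) : R := d `^ (- alpha).

(* SINR for decoding the far user's message at near user k (SIC step) *)
Definition SINR_far N M K (Pw l sk2 bk bkt : R) (Hh E : 'M[C]_(N, M))
    (u : 'cV[C]_N) (V : 'M[C]_(M, K)) (k : 'I_K) : R :=
  Pw * l * abs2 (bform u Hh (col k V)) * bkt ^+ 2 /
  (Pw * l * (abs2 (bform u E (col k V)) * bkt ^+ 2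
             + abs2 (bform u (Hh + E) (col k V)) * bk ^+ 2
             + \sum_(i < K | i != k) abs2 (bform u (Hh + E) (col i V)))
   + sk2).

Definition SINR_near N M K (Pw l sk2 bk : R) (Hh E : 'M[C]_(N, M))
    (u : 'cV[C]_N) (V : 'M[C]_(M, K)) (k : 'I_K) : R :=
  Pw * l * abs2 (bform u Hh (col k V)) * bk ^+ 2 /
  (Pw * l * (abs2 (bform u E (col k V))
             + \sum_(i < K | i != k) abs2 (bform u (Hh + E) (col i V)))
   + sk2).

End Defs.

Section Prob.
Context {d : measure_display} {T : measurableType d} {R : realType}.
Variable P : probability T R.

(* mutual independence of a finite family of real random variables:
   product rule for every choice of Borel sets (taking [set: R] for some
   indices gives the product rule for every subfamily) *)
Definition mutually_independent (I : finType) (X : I -> T -> R) : Prop :=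
  forall B : I -> set R, (forall i, measurable (B i)) ->
    fine (P (\bigcap_(i in [set: I]) (X i @^-1` B i)))
    = \prod_(i : I) fine (P (X i @^-1` B i)).

(* G is a standard circularly-symmetric complex Gaussian random matrix:
   vec(G) ~ CN(0, I), i.e. the real and imaginary parts of all entries
   are mutually independent N(0, 1/2) random variables. *)
Definition std_complex_gaussian_mx N M (G : T -> 'M[R[i]]_(N, M)) : Prop :=
  let X := fun (t : 'I_N * 'I_M * bool) (w : T) =>
    if t.2 then complex.Re (G w t.1.1 t.1.2) else complex.Im (G w t.1.1 t.1.2) in
  (forall t, measurable_fun setT (X t)) /\
  (forall t (B : set R), measurable B ->
     P (X t @^-1` B) = normal_prob 0 (Num.sqrt (2^-1)) B) /\
  mutually_independent X.

End Prob.

(* Main.v *)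
Require Import Defs.
From HB Require Import structures.
From mathcomp Require Import all_boot all_order all_algebra.
From mathcomp Require Import all_classical all_reals all_analysis.
From mathcomp Require Import complex.
From mathcomp Require Import ring lra.
From mathcomp Require Import measurable_realfun.

Set Implicit Arguments.
Unset Strict Implicit.
Unset Printing Implicit Defensive.
Import Order.TTheory GRing.Theory Num.Theory.
Local Open Scope classical_set_scope.
Local Open Scope ring_scope.


Section Aux.
Variable R : realType.
Local Notation C := (R[i]).

Lemma abs2_ge0 (z : C) : 0 <= abs2 z.
Proof. by case: z => a b; rewrite /abs2 /= addr_ge0 // sqr_ge0. Qed.

Lemma abs2_scale (x : R) (z : C) : abs2 (x%:C%C * z) = x ^+ 2 * abs2 z.
Proof. case: z => a b; rewrite /abs2 /=; ring. Qed.

Lemma abs2_up (a e : C) (x : R) : 0 <= x -> x <= 1 ->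
  abs2 (a + x%:C%C * e) <= (1 + x) * abs2 a + 2 * x * abs2 e.
Proof.
case: a => a1 a2; case: e => e1 e2 x0 x1; rewrite /abs2 /=.
rewrite !mul0r !subr0 !addr0.
have h1 : 0 <= x * (a1 - e1) ^+ 2 by rewrite mulr_ge0 // sqr_ge0.
have h2 : 0 <= x * (a2 - e2) ^+ 2 by rewrite mulr_ge0 // sqr_ge0.
have h3 : 0 <= (x - x ^+ 2) * e1 ^+ 2 by rewrite mulr_ge0 ?sqr_ge0 // subr_ge0 expr2 ler_piMl.
have h4 : 0 <= (x - x ^+ 2) * e2 ^+ 2 by rewrite mulr_ge0 ?sqr_ge0 // subr_ge0 expr2 ler_piMl.
nra.
Qed.

Lemma abs2_lo (a e : C) (x : R) : 0 <= x -> x <= 1 ->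
  (1 - x) * abs2 a - x * abs2 e <= abs2 (a + x%:C%C * e).
Proof.
case: a => a1 a2; case: e => e1 e2 x0 x1; rewrite /abs2 /=.
rewrite !mul0r !subr0 !addr0.
have h1 : 0 <= x * (a1 + e1) ^+ 2 by rewrite mulr_ge0 // sqr_ge0.
have h2 : 0 <= x * (a2 + e2) ^+ 2 by rewrite mulr_ge0 // sqr_ge0.
have h3 : 0 <= x ^+ 2 * e1 ^+ 2 by rewrite mulr_ge0 ?sqr_ge0.
have h4 : 0 <= x ^+ 2 * e2 ^+ 2 by rewrite mulr_ge0 ?sqr_ge0.
nra.
Qed.

Lemma Re_sum (I : Type) (r : seq I) (P : pred I) (F : I -> C) :
  complex.Re (\sum_(i <- r | P i) F i) = \sum_(i <- r | P i) complex.Re (F i).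
Proof.
apply: (big_morph (@complex.Re R)) => //.
by move=> [? ?] [? ?].
Qed.

Lemma Im_sum (I : Type) (r : seq I) (P : pred I) (F : I -> C) :
  complex.Im (\sum_(i <- r | P i) F i) = \sum_(i <- r | P i) complex.Im (F i).
Proof.
apply: (big_morph (@complex.Im R)) => //.
by move=> [? ?] [? ?].
Qed.

Lemma bformD m n (a : 'cV[C]_m) (A B : 'M[C]_(m, n)) b :
  bform a (A + B) b = bform a A b + bform a B b.
Proof. by rewrite /bform mulmxDr mulmxDl mxE. Qed.

Lemma bformZ m n (a : 'cV[C]_m) (c : C) (A : 'M[C]_(m, n)) b :
  bform a (c *: A) b = c * bform a A b.
Proof. by rewrite /bform -scalemxAr -scalemxAl mxE. Qed.

Lemma adjmxM m n p (A : 'M[C]_(m, n)) (B : 'M[C]_(n, p)) :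
  adjmx (A *m B) = adjmx B *m adjmx A.
Proof.
rewrite /adjmx -trmx_mul; congr (_^T).
by rewrite (map_mxM (conjc : {rmorphism C -> C})).
Qed.

Lemma adjmxK m n (A : 'M[C]_(m, n)) : adjmx (adjmx A) = A.
Proof.
by apply/matrixP => i j; rewrite /adjmx !mxE conjcK.
Qed.

Lemma norm2_mx n (y : 'cV[C]_n) :
  \sum_(i < n) abs2 (y i 0) = complex.Re ((adjmx y *m y) 0 0).
Proof.
rewrite mxE Re_sum; apply: eq_bigr => i _.
by rewrite /adjmx !mxE; case: (y i 0) => a b; rewrite /abs2 /=; ring.
Qed.

Lemma unitary_sum n (Psi : 'M[C]_n) (nu : 'cV[C]_n) : unitary_mx Psi ->
  \sum_(i < n) abs2 ((adjmx (col i Psi) *m nu) 0 0) = \sum_(i < n) abs2 (nu i 0).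
Proof.
move=> hU.
have hU' : Psi *m adjmx Psi = 1%:M by apply: mulmx1C.
have -> : \sum_(i < n) abs2 ((adjmx (col i Psi) *m nu) 0 0)
   = \sum_(i < n) abs2 ((adjmx Psi *m nu) i 0).
  apply: eq_bigr => i _; congr abs2.
  by rewrite !mxE; apply: eq_bigr => j _; rewrite /adjmx !mxE.
rewrite !norm2_mx adjmxM adjmxK.
by rewrite mulmxA -(mulmxA (adjmx nu)) hU' mulmx1.
Qed.

End Aux.


Section Meas.
Variables (R : realType) (d : measure_display) (T : measurableType d).
Local Notation C := (R[i]).

Definition mC (f : T -> C) := measurable_fun setT (fun w => complex.Re (f w)) /\
  measurable_fun setT (fun w => complex.Im (f w)).

Lemma mC_cst (c : C) : mC (fun _ => c).
Proof. by split; exact: measurable_cst. Qed.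

Lemma mC_add f g : mC f -> mC g -> mC (fun w => f w + g w).
Proof.
move=> [f1 f2] [g1 g2]; split.
- have -> : (fun w => complex.Re (f w + g w)) =
     (fun w => complex.Re (f w)) \+ (fun w => complex.Re (g w)).
    by apply: funext => w /=; case: (f w) => ? ?; case: (g w).
  exact: measurable_funD.
- have -> : (fun w => complex.Im (f w + g w)) =
     (fun w => complex.Im (f w)) \+ (fun w => complex.Im (g w)).
    by apply: funext => w /=; case: (f w) => ? ?; case: (g w).
  exact: measurable_funD.
Qed.

Lemma mC_mul f g : mC f -> mC g -> mC (fun w => f w * g w).
Proof.
move=> [f1 f2] [g1 g2]; split.
- have -> : (fun w => complex.Re (f w * g w)) =
     ((fun w => complex.Re (f w)) \* (fun w => complex.Re (g w))) \-
     ((fun w => complex.Im (f w)) \* (fun w => complex.Im (g w))).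
    by apply: funext => w /=; case: (f w) => ? ?; case: (g w).
  by apply: measurable_funB; apply: measurable_funM.
- have -> : (fun w => complex.Im (f w * g w)) =
     ((fun w => complex.Re (f w)) \* (fun w => complex.Im (g w))) \+
     ((fun w => complex.Im (f w)) \* (fun w => complex.Re (g w))).
    by apply: funext => w /=; case: (f w) => ? ?; case: (g w).
  by apply: measurable_funD; apply: measurable_funM.
Qed.

Lemma mC_sum (I : Type) (r : seq I) (F : I -> T -> C) :
  (forall i, mC (F i)) -> mC (fun w => \sum_(i <- r) F i w).
Proof.
move=> hF; split.
- have -> : (fun w => complex.Re (\sum_(i <- r) F i w)) =
     (fun w => \sum_(i <- r) complex.Re (F i w)).
    by apply: funext => w; rewrite Re_sum.
  by apply: measurable_sum => i; case: (hF i).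
- have -> : (fun w => complex.Im (\sum_(i <- r) F i w)) =
     (fun w => \sum_(i <- r) complex.Im (F i w)).
    by apply: funext => w; rewrite Im_sum.
  by apply: measurable_sum => i; case: (hF i).
Qed.

Lemma mC_abs2 f : mC f -> measurable_fun setT (fun w => abs2 (f w)).
Proof.
move=> [f1 f2]; rewrite /abs2.
apply: (@measurable_funD _ _ _ _ (fun w => complex.Re (f w) ^+ 2)
   (fun w => complex.Im (f w) ^+ 2)); exact: measurable_funX.
Qed.

Lemma mC_lin N M (G : T -> 'M[C]_(N, M)) :
  (forall p q, mC (fun w => G w p q)) ->
  forall (L : 'rV[C]_N) (r : 'cV[C]_M), mC (fun w => ((L *m G w) *m r) 0 0).
Proof.
move=> hG L r.
have -> : (fun w => ((L *m G w) *m r) 0 0) =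
   (fun w => \sum_(q < M) (\sum_(p < N) L 0 p * G w p q) * r q 0).
  apply: funext => w; rewrite mxE; apply: eq_bigr => q _; by rewrite mxE.
apply: mC_sum => q; apply: mC_mul; last exact: mC_cst.
apply: mC_sum => p; apply: mC_mul => //; exact: mC_cst.
Qed.

End Meas.


Lemma tail_small (R : realType) (d : measure_display) (T : measurableType d)
  (P : probability T R) (W : T -> R) (mW : measurable_fun setT W)
  (eps : R) (heps : 0 < eps) :
  exists n : nat, measurable [set w | (n%:R <= W w)%R] /\
     (P [set w | (n%:R <= W w)%R] < eps%:E)%E.
Proof.
pose F := fun n : nat => [set w | (n%:R <= W w)%R].
have mF : forall n, measurable (F n).
  move=> n; have := mW measurableT _ (measurable_itv `[n%:R, +oo[).
  rewrite setTI; congr measurable; apply/seteqP; split => w /=;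
    by rewrite in_itv /= andbT.
have capF : \bigcap_n F n = set0.
  apply/seteqP; split => // w /= hw.
  have := hw (Num.Def.archi_bound `|W w|) I; rewrite /F /=.
  have := archi_boundP (normr_ge0 (W w)).
  move=> h1 h2; have := le_lt_trans h2 (le_lt_trans (ler_norm (W w)) h1).
  by rewrite ltxx.
have ni : nonincreasing_seq F.
  move=> n m nm; apply/subsetPset => w; rewrite /F /=.
  by apply: le_trans; rewrite ler_nat.
have cv := nonincreasing_cvg_mu (mu := P) _ mF _ ni.
rewrite capF measure0 in cv.
have /cv {}cv : (P (F 0%N) < +oo)%E.
  by rewrite (le_lt_trans (probability_le1 P (mF 0%N))) // ltry.
have {}cv := cv measurable0.
have [_ cv2] := (fine_cvgP (P \o F) 0).1 cv.
have /cvgrPdist_lt /(_ eps heps) [N _ hN] := cv2.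
exists N; split; first exact: mF.
have := hN N (leqnn N); rewrite /= sub0r normrN.
have fP : P (F N) \is a fin_num by apply: fin_num_measure; exact: mF.
rewrite -(fineK fP) lte_fin; apply: le_lt_trans; exact: ler_norm.
Qed.


Section Real.
Variable R : realType.
Local Notation C := (R[i]).

Lemma ln2_gt0 : 0 < ln (2 : R).
Proof. by apply: ln_gt0; rewrite ltr1n. Qed.

Lemma log2_lt (S r : R) : 0 <= S ->
  (log2 (1 + S) < r) = (1 + S < expR (r * ln 2)).
Proof.
move=> S0; rewrite /log2 ltr_pdivrMr ?ln2_gt0 //.
rewrite -ltr_expR lnK //; rewrite posrE; lra.
Qed.

Lemma log2_gt (S r : R) : 0 <= S ->
  (r < log2 (1 + S)) = (expR (r * ln 2) < 1 + S).
Proof.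
move=> S0; rewrite /log2 ltr_pdivlMr ?ln2_gt0 //.
rewrite -[X in X = _]ltr_expR lnK //; rewrite posrE; lra.
Qed.

Lemma c_gt0 (r : R) : 0 < r -> 0 < expR (r * ln 2) - 1.
Proof. by move=> r0; rewrite subr_gt0 expR_gt1 mulr_gt0 // ln2_gt0. Qed.

Lemma div_lt_char (n D c : R) : 0 <= D -> 0 < c ->
  (n / D < c) = (D == 0) || (n < c * D).
Proof.
move=> D0 c0; have [->|Dn0] := eqVneq D 0; first by rewrite invr0 mulr0 c0.
have Dp : 0 < D by rewrite lt_def Dn0.
by rewrite /= ltr_pdivrMr // mulrC.
Qed.

Lemma far_upper (b bt x mk ek Sm Se U Sup : R) :
  0 <= b -> 0 <= bt -> b + bt = 1 -> 0 <= x -> x <= 1 ->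
  0 <= mk -> 0 <= ek -> 0 <= Sm -> 0 <= Se ->
  U <= (1 + x) * mk + 2 * x * ek -> Sup <= (1 + x) * Sm + 2 * x * Se ->
  x ^+ 2 * ek * bt + U * b + Sup <=
    mk * b + Sm + x * ((mk + Sm) + 3 * (ek + Se)).
Proof.
move=> b0 bt0 hb x0 x1 mk0 ek0 Sm0 Se0 hU hS.
have h1 : 0 <= ((1 + x) * mk + 2 * x * ek - U) * b.
  by rewrite mulr_ge0 // subr_ge0.
have h2 : 0 <= x * mk * (1 - b) by rewrite !mulr_ge0 //; lra.
have h3 : 0 <= x * ek * (1 - b) by rewrite !mulr_ge0 //; lra.
have h4 : 0 <= x * ek * (1 - x * bt).
  rewrite !mulr_ge0 // subr_ge0; have : bt <= 1 by lra.
  by move=> bt1; rewrite -[1]mul1r ler_pM.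
nra.
Qed.

Lemma far_lower (b bt x mk ek Sm Se U Sup : R) :
  0 <= b -> 0 <= bt -> b + bt = 1 -> 0 <= x -> x <= 1 ->
  0 <= mk -> 0 <= ek -> 0 <= Sm -> 0 <= Se ->
  (1 - x) * mk - x * ek <= U -> (1 - x) * Sm - x * Se <= Sup ->
  mk * b + Sm - x * ((mk + Sm) + 3 * (ek + Se)) <=
    x ^+ 2 * ek * bt + U * b + Sup.
Proof.
move=> b0 bt0 hb x0 x1 mk0 ek0 Sm0 Se0 hU hS.
have h1 : 0 <= (U - ((1 - x) * mk - x * ek)) * b.
  by rewrite mulr_ge0 // subr_ge0.
have h2 : 0 <= x * mk * (1 - b) by rewrite !mulr_ge0 //; lra.
have h3 : 0 <= x * ek * (1 - b) by rewrite !mulr_ge0 //; lra.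
have h4 : 0 <= x ^+ 2 * ek * bt by rewrite !mulr_ge0 // sqr_ge0.
nra.
Qed.

Lemma near_upper (x mk ek Sm Se Sup : R) :
  0 <= x -> x <= 1 ->
  0 <= mk -> 0 <= ek -> 0 <= Sm -> 0 <= Se ->
  Sup <= (1 + x) * Sm + 2 * x * Se ->
  x ^+ 2 * ek + Sup <= Sm + x * ((mk + Sm) + 3 * (ek + Se)).
Proof.
move=> x0 x1 mk0 ek0 Sm0 Se0 hS.
have h4 : 0 <= x * ek * (1 - x) by rewrite !mulr_ge0 //; lra.
have h2 : 0 <= x * mk by rewrite mulr_ge0.
have h3 : 0 <= x * Se by rewrite mulr_ge0.
nra.
Qed.

Lemma near_lower (x mk ek Sm Se Sup : R) :
  0 <= x -> x <= 1 ->
  0 <= mk -> 0 <= ek -> 0 <= Sm -> 0 <= Se ->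
  (1 - x) * Sm - x * Se <= Sup ->
  Sm - x * ((mk + Sm) + 3 * (ek + Se)) <= x ^+ 2 * ek + Sup.
Proof.
move=> x0 x1 mk0 ek0 Sm0 Se0 hS.
have h4 : 0 <= x ^+ 2 * ek by rewrite !mulr_ge0 // sqr_ge0.
have h2 : 0 <= x * mk by rewrite mulr_ge0.
have h3 : 0 <= x * ek by rewrite mulr_ge0.
have h5 : 0 <= x * Se by rewrite mulr_ge0.
nra.
Qed.

Lemma sum_up (I : finType) (Q : pred I) (a e : I -> C) (x : R) :
  0 <= x -> x <= 1 ->
  \sum_(i | Q i) abs2 (a i + x%:C%C * e i) <=
  (1 + x) * \sum_(i | Q i) abs2 (a i) + 2 * x * \sum_(i | Q i) abs2 (e i).
Proof.
move=> x0 x1; rewrite !mulr_sumr -big_split /=.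
by apply: ler_sum => i _; apply: abs2_up.
Qed.

Lemma sum_lo (I : finType) (Q : pred I) (a e : I -> C) (x : R) :
  0 <= x -> x <= 1 ->
  (1 - x) * \sum_(i | Q i) abs2 (a i) - x * \sum_(i | Q i) abs2 (e i) <=
  \sum_(i | Q i) abs2 (a i + x%:C%C * e i).
Proof.
move=> x0 x1; rewrite !mulr_sumr -sumrN -big_split /=.
by apply: ler_sum => i _; apply: abs2_lo.
Qed.

Lemma noout_real (D D0 N c q eta : R) : 0 < c -> D <= D0 + q -> D0 - q <= D ->
  q < eta -> eta <= D0 -> eta * c <= N - c * D0 -> 0 < D /\ c * D < N.
Proof.
move=> c0 h1 h2 h3 h4 h5; split; first lra.
have h6 : c * D <= c * (D0 + q) by rewrite ler_wpM2l // ltW.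
have h7 : c * q < c * eta by rewrite ltr_pM2l.
lra.
Qed.

Lemma lin_up (p s L a b x : R) : 0 <= p -> L <= a + x * b ->
  p * L + s <= p * a + s + x * (p * b).
Proof.
move=> p0 h; have := ler_wpM2l p0 h.
by rewrite mulrDr mulrCA => h'; rewrite addrAC lerD2r.
Qed.

Lemma lin_lo (p s L a b x : R) : 0 <= p -> a - x * b <= L ->
  p * a + s - x * (p * b) <= p * L + s.
Proof.
move=> p0 h; have := ler_wpM2l p0 h.
by rewrite mulrBr mulrCA => h'; rewrite addrAC lerD2r.
Qed.

End Real.


Lemma measurable_sum_filter (R : realType) (d : measure_display) (T : measurableType d)
  (I : Type) (r : seq I) (Q : pred I) (F : I -> T -> R) :
  (forall i, measurable_fun setT (F i)) ->
  measurable_fun setT (fun w => \sum_(i <- r | Q i) F i w).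
Proof.
move=> hF.
have -> : (fun w => \sum_(i <- r | Q i) F i w) =
  (fun w => \sum_(i <- r) (if Q i then F i w else 0)).
  by apply: funext => w; rewrite big_mkcond.
apply: measurable_sum => i; case: (Q i) => //; exact: measurable_cst.
Qed.

Lemma log2_lt' (R : realType) (S r : R) : 0 <= S ->
  (log2 (1 + S) < r) = (S < expR (r * ln 2) - 1).
Proof. by move=> S0; rewrite log2_lt // ltrBrDl addrC. Qed.

Theorem theorem6
  (R : realType) (d : measure_display) (T : measurableType d)
  (P : probability T R)
  (N M K : nat) (hKMN : (K <= minn M N)%N) (k : 'I_K)
  (Hh : 'M[R[i]]_(N, M))
  (Rr Rrh : 'M[R[i]]_N) (Rt Rth : 'M[R[i]]_M)
  (hRr : posdef Rr) (hRt : posdef Rt)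
  (hRrh : posdef Rrh /\ Rrh *m Rrh = Rr)   (* Rrh = R_r^{1/2} *)
  (hRth : posdef Rth /\ Rth *m Rth = Rt)   (* Rth = R_t^{1/2} *)
  (G : T -> 'M[R[i]]_(N, M)) (hG : std_complex_gaussian_mx P G)
  (V : 'M[R[i]]_(M, K)) (hV : forall i : 'I_K, vnorm2 (col i V) = 1)
  (u : 'cV[R[i]]_N) (hu : u != 0)
  (bk bkt : R) (hbk : 0 <= bk) (hbkt : 0 <= bkt)
  (hb : bk ^+ 2 + bkt ^+ 2 = 1)
  (Pw dk alpha sigma2 : R) (hPw : 0 < Pw) (hdk : 0 < dk) (halpha : 2 < alpha)
  (hsigma2 : 0 <= sigma2)
  (Psi : 'M[R[i]]_K) (hPsi : unitary_mx Psi)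
  (hdec : forall sh2 : R, 0 < sh2 ->
     exists Delta : 'M[R[i]]_K, is_diag_mx Delta /\
       (sh2%:C%C * bform u Rr u) *: (adjmx V *m Rt *m V)^T
       = Psi *m Delta *m adjmx Psi)
  (Rk Rkt : R) (hRk : 0 < Rk) (hRkt : 0 < Rkt) :
  let l := pathloss alpha dk in
  let sk2 := sigma2 * vnorm2 u in
  let mu := fun i : 'I_K => bform u Hh (col i V) in
  let nu1 : 'cV[R[i]]_K :=
    \col_i (if i == k then (bk ^+ 2)%:C%C * mu i else mu i) in
  let nu2 : 'cV[R[i]]_K := \col_i (if i == k then 0 else mu i) in
  Rkt < log2 (1 + bkt ^+ 2 * abs2 (mu k) /
     (\sum_(i < K) abs2 ((adjmx (col i Psi) *m nu1) 0 0)
      + bk ^+ 2 * bkt ^+ 2 * abs2 (mu k) + sk2 / (Pw * l))) ->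
  Rk < log2 (1 + abs2 (mu k) * bk ^+ 2 /
     (\sum_(i < K) abs2 ((adjmx (col i Psi) *m nu2) 0 0)
      + sk2 / (Pw * l))) ->
  let E := fun (sh2 : R) (w : T) =>
    Rrh *m ((Num.sqrt sh2)%:C%C *: G w) *m Rth in
  P [set w | log2 (1 + SINR_far Pw l sk2 bk bkt Hh (E sh2 w) u V k) < Rkt
           \/ log2 (1 + SINR_near Pw l sk2 bk Hh (E sh2 w) u V k) < Rk]
    @[sh2 --> 0^'+] --> 0%E.
Proof.
move=> l sk2 mu nu1 nu2 hfar hnear E.
move: hG; rewrite /std_complex_gaussian_mx /= => -[mX _].
have mG : forall p q, mC (fun w => G w p q).
  move=> p q; split; [exact: (mX (p, q, true)) | exact: (mX (p, q, false))].
pose e := fun (i : 'I_K) w => bform u (Rrh *m G w *m Rth) (col i V).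
have me : forall i, mC (fun w => e i w).
  move=> i; rewrite /e /bform.
  have -> : (fun w => (adjmx u *m (Rrh *m G w *m Rth) *m col i V) 0 0) =
     (fun w => (((adjmx u *m Rrh) *m G w) *m (Rth *m col i V)) 0 0).
    by apply: funext => w; rewrite !mulmxA.
  exact: mC_lin.
have hEe : forall s w i, bform u (E s w) (col i V) = (Num.sqrt s)%:C%C * e i w.
  by move=> s w i; rewrite /E -scalemxAr -scalemxAl bformZ.
have hHEe : forall s w i,
    bform u (Hh + E s w) (col i V) = mu i + (Num.sqrt s)%:C%C * e i w.
  by move=> s w i; rewrite bformD hEe.
have hl : 0 < l by apply: powR_gt0.
have hPl : 0 < Pw * l by rewrite mulr_gt0.
have hsk2 : 0 <= sk2.
  by rewrite mulr_ge0 // /vnorm2 sumr_ge0 // => i _; apply: abs2_ge0.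
pose D1 := fun x w => Pw * l * (abs2 (x%:C%C * e k w) * bkt ^+ 2
   + abs2 (mu k + x%:C%C * e k w) * bk ^+ 2
   + \sum_(i < K | i != k) abs2 (mu i + x%:C%C * e i w)) + sk2.
pose D2 := fun x w => Pw * l * (abs2 (x%:C%C * e k w)
   + \sum_(i < K | i != k) abs2 (mu i + x%:C%C * e i w)) + sk2.
pose N1 := Pw * l * abs2 (mu k) * bkt ^+ 2.
pose N2 := Pw * l * abs2 (mu k) * bk ^+ 2.
have SfarE : forall s w,
    SINR_far Pw l sk2 bk bkt Hh (E s w) u V k = N1 / D1 (Num.sqrt s) w.
  move=> s w; rewrite /SINR_far hEe hHEe.
  by under eq_bigr => i _ do rewrite hHEe.
have SnearE : forall s w,
    SINR_near Pw l sk2 bk Hh (E s w) u V k = N2 / D2 (Num.sqrt s) w.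
  move=> s w; rewrite /SINR_near hEe.
  by under eq_bigr => i _ do rewrite hHEe.
pose D10 := Pw * l * (abs2 (mu k) * bk ^+ 2 + \sum_(i < K | i != k) abs2 (mu i)) + sk2.
pose D20 := Pw * l * (\sum_(i < K | i != k) abs2 (mu i)) + sk2.
have hN1 : 0 <= N1 by rewrite !mulr_ge0 ?abs2_ge0 ?sqr_ge0 // ltW.
have hN2 : 0 <= N2 by rewrite !mulr_ge0 ?abs2_ge0 ?sqr_ge0 // ltW.
have hSm : 0 <= \sum_(i < K | i != k) abs2 (mu i) by rewrite sumr_ge0 // => i _; exact: abs2_ge0.
have hD10 : 0 <= D10.
  by rewrite addr_ge0 // mulr_ge0 ?(ltW hPl) // addr_ge0 // mulr_ge0 ?abs2_ge0 ?sqr_ge0.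
have hD20 : 0 <= D20 by rewrite addr_ge0 // mulr_ge0 ?(ltW hPl).
have S1E : \sum_(i < K) abs2 ((adjmx (col i Psi) *m nu1) 0 0) =
    (bk ^+ 2) ^+ 2 * abs2 (mu k) + \sum_(i < K | i != k) abs2 (mu i).
  rewrite unitary_sum // (bigD1 k) //= {1}/nu1 mxE eqxx abs2_scale.
  by congr (_ + _); apply: eq_bigr => i /negbTE ik; rewrite /nu1 mxE ik.
have S2E : \sum_(i < K) abs2 ((adjmx (col i Psi) *m nu2) 0 0) =
    \sum_(i < K | i != k) abs2 (mu i).
  rewrite unitary_sum // (bigD1 k) //= {1}/nu2 mxE eqxx.
  rewrite [abs2 0]/abs2 /= expr0n /= addr0 add0r.
  by apply: eq_bigr => i /negbTE ik; rewrite /nu2 mxE ik.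
have Pl0 : Pw * l != 0 by rewrite lt0r_neq0.
have hb' : bkt ^+ 2 = 1 - bk ^+ 2 by lra.
rewrite S1E in hfar; rewrite S2E in hnear.
have eq1 : bkt ^+ 2 * abs2 (mu k) / ((bk ^+ 2) ^+ 2 * abs2 (mu k)
    + \sum_(i < K | i != k) abs2 (mu i) + bk ^+ 2 * bkt ^+ 2 * abs2 (mu k)
    + sk2 / (Pw * l)) = N1 / D10.
  have -> : (bk ^+ 2) ^+ 2 * abs2 (mu k)
    + \sum_(i < K | i != k) abs2 (mu i) + bk ^+ 2 * bkt ^+ 2 * abs2 (mu k)
    + sk2 / (Pw * l) = D10 / (Pw * l).
    by rewrite /D10 hb'; field; rewrite !lt0r_neq0.
  by rewrite invf_div mulrA /N1; congr (_ / _); ring.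
have eq2 : abs2 (mu k) * bk ^+ 2 / (\sum_(i < K | i != k) abs2 (mu i)
    + sk2 / (Pw * l)) = N2 / D20.
  have -> : \sum_(i < K | i != k) abs2 (mu i)
    + sk2 / (Pw * l) = D20 / (Pw * l).
    by rewrite /D20; field; rewrite !lt0r_neq0.
  by rewrite invf_div mulrA /N2; congr (_ / _); ring.
rewrite eq1 log2_gt ?divr_ge0 // in hfar.
rewrite eq2 log2_gt ?divr_ge0 // in hnear.
pose c1 := expR (Rkt * ln 2) - 1.
pose c2 := expR (Rk * ln 2) - 1.
have c1p : 0 < c1 by apply: c_gt0.
have c2p : 0 < c2 by apply: c_gt0.
have hc1 : c1 < N1 / D10 by rewrite /c1; lra.
have hc2 : c2 < N2 / D20 by rewrite /c2; lra.
have D10p : 0 < D10.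
  rewrite lt_def hD10 andbT; apply/eqP => h0; move: hc1; rewrite h0 invr0 mulr0; lra.
have D20p : 0 < D20.
  rewrite lt_def hD20 andbT; apply/eqP => h0; move: hc2; rewrite h0 invr0 mulr0; lra.
have key1 : c1 * D10 < N1 by rewrite -ltr_pdivlMr.
have key2 : c2 * D20 < N2 by rewrite -ltr_pdivlMr.
pose A := \sum_(i < K) abs2 (mu i).
pose W := fun w => \sum_(i < K) abs2 (e i w).
have AE : A = abs2 (mu k) + \sum_(i < K | i != k) abs2 (mu i) by rewrite /A (bigD1 k).
have WE : forall w, W w = abs2 (e k w) + \sum_(i < K | i != k) abs2 (e i w).
  by move=> w; rewrite /W (bigD1 k).
have hSe : forall w, 0 <= \sum_(i < K | i != k) abs2 (e i w).
  by move=> w; rewrite sumr_ge0 // => i _; exact: abs2_ge0.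
have hW : forall w, 0 <= W w by move=> w; rewrite sumr_ge0 // => i _; exact: abs2_ge0.
have hA : 0 <= A by rewrite sumr_ge0 // => i _; exact: abs2_ge0.
have b2 : 0 <= bk ^+ 2 by rewrite sqr_ge0.
have bt2 : 0 <= bkt ^+ 2 by rewrite sqr_ge0.
have D1b : forall x w, 0 <= x -> x <= 1 ->
    D1 x w <= D10 + x * (Pw * l * (A + 3 * W w)) /\
    D10 - x * (Pw * l * (A + 3 * W w)) <= D1 x w.
  move=> x w x0 x1.
  have hSu : \sum_(i < K | i != k) abs2 (mu i + x%:C%C * e i w) <=
     (1 + x) * \sum_(i < K | i != k) abs2 (mu i) + 2 * x * \sum_(i < K | i != k) abs2 (e i w)
     := sum_up _ _ _ x0 x1.
  have hSl : (1 - x) * \sum_(i < K | i != k) abs2 (mu i) - x * \sum_(i < K | i != k) abs2 (e i w) <=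
     \sum_(i < K | i != k) abs2 (mu i + x%:C%C * e i w) := sum_lo _ _ _ x0 x1.
  have hu1 := far_upper b2 bt2 hb x0 x1 (abs2_ge0 (mu k)) (abs2_ge0 (e k w)) hSm (hSe w)
     (abs2_up (mu k) (e k w) x0 x1) hSu.
  have hl1 := far_lower b2 bt2 hb x0 x1 (abs2_ge0 (mu k)) (abs2_ge0 (e k w)) hSm (hSe w)
     (abs2_lo (mu k) (e k w) x0 x1) hSl.
  rewrite /D1 /D10 AE WE abs2_scale; split; [exact: lin_up (ltW hPl) hu1 | exact: lin_lo (ltW hPl) hl1].
have D2b : forall x w, 0 <= x -> x <= 1 ->
    D2 x w <= D20 + x * (Pw * l * (A + 3 * W w)) /\
    D20 - x * (Pw * l * (A + 3 * W w)) <= D2 x w.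
  move=> x w x0 x1.
  have hSu : \sum_(i < K | i != k) abs2 (mu i + x%:C%C * e i w) <=
     (1 + x) * \sum_(i < K | i != k) abs2 (mu i) + 2 * x * \sum_(i < K | i != k) abs2 (e i w)
     := sum_up _ _ _ x0 x1.
  have hSl : (1 - x) * \sum_(i < K | i != k) abs2 (mu i) - x * \sum_(i < K | i != k) abs2 (e i w) <=
     \sum_(i < K | i != k) abs2 (mu i + x%:C%C * e i w) := sum_lo _ _ _ x0 x1.
  have hu1 := near_upper x0 x1 (abs2_ge0 (mu k)) (abs2_ge0 (e k w)) hSm (hSe w) hSu.
  have hl1 := near_lower x0 x1 (abs2_ge0 (mu k)) (abs2_ge0 (e k w)) hSm (hSe w) hSl.
  rewrite /D2 /D20 AE WE abs2_scale; split; [exact: lin_up (ltW hPl) hu1 | exact: lin_lo (ltW hPl) hl1].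
pose eta := Num.min (Num.min D10 ((N1 - c1 * D10) / c1))
                    (Num.min D20 ((N2 - c2 * D20) / c2)).
have etap : 0 < eta.
  by rewrite /eta !lt_min D10p D20p !divr_gt0 // subr_gt0.
have e1 : eta <= D10 by rewrite /eta !ge_min lexx.
have e2 : eta * c1 <= N1 - c1 * D10.
  by rewrite -ler_pdivlMr // /eta !ge_min lexx ?orbT.
have e3 : eta <= D20 by rewrite /eta !ge_min lexx ?orbT.
have e4 : eta * c2 <= N2 - c2 * D20.
  by rewrite -ler_pdivlMr // /eta !ge_min lexx ?orbT.
have noout : forall x w, 0 <= x -> x <= 1 ->
    x * (Pw * l * (A + 3 * W w)) < eta ->
    ((D1 x w == 0) || (N1 < c1 * D1 x w)) = false /\
    ((D2 x w == 0) || (N2 < c2 * D2 x w)) = false.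
  move=> x w x0 x1 hx.
  have [u1 l1] := D1b x w x0 x1.
  have [u2 l2] := D2b x w x0 x1.
  have [p1 q1] := noout_real c1p u1 l1 hx e1 e2.
  have [p2 q2] := noout_real c2p u2 l2 hx e3 e4.
  by rewrite !gt_eqF //= !ltNge !ltW.
have hD1 : forall x w, 0 <= D1 x w.
  move=> x w; rewrite addr_ge0 // mulr_ge0 ?(ltW hPl) //.
  apply: addr_ge0; first apply: addr_ge0.
  - by rewrite mulr_ge0 ?abs2_ge0.
  - by rewrite mulr_ge0 ?abs2_ge0.
  - by rewrite sumr_ge0 // => i _; exact: abs2_ge0.
have hD2 : forall x w, 0 <= D2 x w.
  move=> x w; rewrite addr_ge0 // mulr_ge0 ?(ltW hPl) //.
  apply: addr_ge0; first exact: abs2_ge0.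
  by rewrite sumr_ge0 // => i _; exact: abs2_ge0.
have mD1 : forall x, measurable_fun setT (D1 x).
  move=> x; rewrite /D1.
  apply: measurable_funD; last exact: measurable_cst.
  apply: measurable_funM; first exact: measurable_cst.
  apply: measurable_funD; first apply: measurable_funD.
  - apply: measurable_funM; last exact: measurable_cst.
    by apply: mC_abs2; apply: mC_mul; [exact: mC_cst | exact: me].
  - apply: measurable_funM; last exact: measurable_cst.
    apply: mC_abs2; apply: mC_add; first exact: mC_cst.
    by apply: mC_mul; [exact: mC_cst | exact: me].
  - apply: measurable_sum_filter => i.
    apply: mC_abs2; apply: mC_add; first exact: mC_cst.
    by apply: mC_mul; [exact: mC_cst | exact: me].
have mD2 : forall x, measurable_fun setT (D2 x).
  move=> x; rewrite /D2.
  apply: measurable_funD; last exact: measurable_cst.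
  apply: measurable_funM; first exact: measurable_cst.
  apply: measurable_funD.
  - by apply: mC_abs2; apply: mC_mul; [exact: mC_cst | exact: me].
  - apply: measurable_sum_filter => i.
    apply: mC_abs2; apply: mC_add; first exact: mC_cst.
    by apply: mC_mul; [exact: mC_cst | exact: me].
have mW : measurable_fun setT W.
  apply: measurable_sum_filter => i; apply: mC_abs2; exact: me.
pose As := fun s => [set w | log2 (1 + SINR_far Pw l sk2 bk bkt Hh (E s w) u V k) < Rkt
           \/ log2 (1 + SINR_near Pw l sk2 bk Hh (E s w) u V k) < Rk].
have AsE : forall s, As s = [set w |
     ((D1 (Num.sqrt s) w == 0) || (N1 < c1 * D1 (Num.sqrt s) w)) ||
     ((D2 (Num.sqrt s) w == 0) || (N2 < c2 * D2 (Num.sqrt s) w))].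
  move=> s; rewrite /As; apply/seteqP; split => w /=;
    rewrite SfarE SnearE !log2_lt' ?divr_ge0 // -/c1 -/c2 !div_lt_char //.
  - by case=> ->; rewrite ?orbT.
  - by case/orP => ->; [left | right].
have mAs : forall s, measurable (As s).
  move=> s; rewrite AsE.
  have mb : measurable_fun setT (fun w =>
     ((D1 (Num.sqrt s) w == 0) || (N1 < c1 * D1 (Num.sqrt s) w)) ||
     ((D2 (Num.sqrt s) w == 0) || (N2 < c2 * D2 (Num.sqrt s) w))).
    apply: measurable_or; apply: measurable_or.
    - by apply: measurable_fun_eqr => //; exact: measurable_cst.
    - apply: measurable_fun_ltr; first exact: measurable_cst.
      by apply: measurable_funM => //; exact: measurable_cst.
    - by apply: measurable_fun_eqr => //; exact: measurable_cst.
    - apply: measurable_fun_ltr; first exact: measurable_cst.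
      by apply: measurable_funM => //; exact: measurable_cst.
  have := mb measurableT [set true] I; rewrite setTI; congr measurable.
change ((fun s => P (As s)) s @[s --> 0^'+] --> 0%E).
apply/fine_cvgP; split.
  by near=> s; apply: fin_num_measure; exact: mAs.
apply/cvgrPdist_lt => eps heps.
have [n0 [mS hS]] := tail_small P mW heps.
have h3n : 0 <= 3 * (n0%:R : R) by rewrite mulr_ge0 ?ler0n.
have Kp : 0 < Pw * l * (A + 3 * n0%:R + 1).
  by rewrite mulr_gt0 //; lra.
pose r := eta / (Pw * l * (A + 3 * n0%:R + 1)).
have rp : 0 < r by rewrite divr_gt0.
pose m := Num.min 1 r.
have mp : 0 < m by rewrite lt_min rp ltr01.
near=> s.
have s0 : 0 < s by near: s; exact: nbhs_right_gt.
have sm : s < m ^+ 2 by near: s; apply: nbhs_right_lt; rewrite exprn_gt0.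
rewrite /= sub0r normrN.
have x0 : 0 <= Num.sqrt s := sqrtr_ge0 s.
have xm : Num.sqrt s < m.
  by rewrite -(ger0_norm (ltW mp)) -sqrtr_sqr ltr_sqrt // exprn_gt0.
have x1 : Num.sqrt s <= 1 by apply: ltW (lt_le_trans xm _); rewrite /m ge_min lexx.
have xr : Num.sqrt s < r by apply: lt_le_trans xm _; rewrite /m ge_min lexx orbT.
have sub : As s `<=` [set w | (n0%:R <= W w)%R].
  move=> w hw; rewrite /=; case: (leP (n0%:R) (W w)) => // hlt; exfalso.
  have hq : Num.sqrt s * (Pw * l * (A + 3 * W w)) < eta.
    have q1 : Num.sqrt s * (Pw * l * (A + 3 * W w)) <=
              Num.sqrt s * (Pw * l * (A + 3 * n0%:R + 1)).
      by rewrite ler_wpM2l // ler_wpM2l ?(ltW hPl) //; lra.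
    have q2 : Num.sqrt s * (Pw * l * (A + 3 * n0%:R + 1)) <
              r * (Pw * l * (A + 3 * n0%:R + 1)) by rewrite ltr_pM2r.
    move: q2; rewrite /r divfK ?lt0r_neq0 // => q2.
    exact: le_lt_trans q1 q2.
  have [f1 f2] := noout (Num.sqrt s) w x0 x1 hq.
  by move: hw; rewrite AsE /= f1 f2.
have le : (P (As s) <= P [set w | (n0%:R <= W w)%R])%E.
  by apply: le_measure; rewrite ?inE //; exact: mAs.
have fA : P (As s) \is a fin_num by apply: fin_num_measure; exact: mAs.
have fS : P [set w | (n0%:R <= W w)%R] \is a fin_num by apply: fin_num_measure.
rewrite ger0_norm; last exact: fine_ge0 (measure_ge0 _ _).
apply: le_lt_trans (fine_le fA fS le) _.
by rewrite -lte_fin fineK.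
Unshelve. all: by end_near.
Qed.
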